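(* Let $r,s$ be real numbers with $s<r$ and $s\le 0$, let $G$ be a finite group and let $n$ be a positive divisor of $|G|$. Then $T_{G,n}(r,s)\ge 0$, with equality if and only if for every positive divisor $m$ of $n$, $G$ contains exactly one cyclic subgroup of order $m$.
   Context: $o(x)$ is the order of $x$, $\varphi$ is Euler's totient function, and $C_N$ is the cyclic group of order $N$. For a finite group $G$, a positive divisor $n$ of $|G|$ and reals $r,s$, define $R_{G,n}(r,s) := \sum_{x\in G,\ o(x)\mid n} \frac{o(x)^s}{\varphi(o(x))^r}$ and $T_{G,n}(r,s) := R_{G,n}(r,s) - R_{C_{|G|},n}(r,s)$. *)

(* Defs.v *)
From Stdlib Require Import Reals.
From mathcomp Require Import all_boot all_order all_algebra all_fingroup all_solvable.
Set Implicit Arguments. Unset Strict Implicit. Unset Printing Implicit Defensive.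

(* R_{G,n}(r,s) = sum over x in G with o(x) | n of o(x)^s / phi(o(x))^r,
   with real exponents via Rpower (o(x), phi(o(x)) are >= 1). *)
Definition Rsum (gT : finGroupType) (G : {set gT}) (n : nat) (r s : R) : R :=
  \big[Rplus/R0]_(x in G | (#[x]%g %| n)%N)
     (Rdiv (Rpower (INR #[x]%g) s) (Rpower (INR (totient #[x]%g)) r)).

Definition Cyc (N : nat) : {set 'Z_N} := Zp N.

Definition Tsum (gT : finGroupType) (G : {set gT}) (n : nat) (r s : R) : R :=
  Rminus (Rsum G n r s) (Rsum (Cyc #|G|) n r s).

Definition num_cyclic_subgroups (gT : finGroupType) (G : {set gT}) (m : nat) : nat :=
  #|[set H : {group gT} | [&& H \subset G, cyclic H & #|H| == m]]|.

(* Main.v *)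
Require Import Defs.
From Stdlib Require Import Reals Lra.
From HB Require Import structures.
From mathcomp Require Import all_boot all_order all_algebra all_fingroup all_solvable.
Set Implicit Arguments. Unset Strict Implicit. Unset Printing Implicit Defensive.
HB.instance Definition _ := Monoid.isComLaw.Build R R0 Rplus (fun x y z => esym (Rplus_assoc x y z)) Rplus_comm Rplus_0_l.
HB.instance Definition _ := Monoid.isMulLaw.Build R R0 Rmult Rmult_0_l Rmult_0_r.
HB.instance Definition _ := Monoid.isAddLaw.Build R Rmult Rplus Rmult_plus_distr_r Rmult_plus_distr_l.

Section RSum.
Variables (I : Type) (r : seq I) (P : pred I).

Lemma rsum_le (F G : I -> R) : (forall i, P i -> Rle (F i) (G i)) ->
  Rle (\big[Rplus/R0]_(i <- r | P i) F i) (\big[Rplus/R0]_(i <- r | P i) G i).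
Proof.
move=> H; apply: (big_ind2 (fun a b => Rle a b)) => //; first by apply: Rle_refl.
by move=> *; apply: Rplus_le_compat.
Qed.

Lemma rsum_ge0 (F : I -> R) : (forall i, P i -> Rle 0 (F i)) ->
  Rle 0 (\big[Rplus/R0]_(i <- r | P i) F i).
Proof.
move=> H; apply: (big_ind (fun a => Rle 0 a)) => //; first by apply: Rle_refl.
by move=> *; lra.
Qed.
End RSum.

Lemma rsum_lt (I : finType) (P : pred I) (F G : I -> R) i0 :
  (forall i, P i -> Rle (F i) (G i)) -> P i0 -> Rlt (F i0) (G i0) ->
  Rlt (\big[Rplus/R0]_(i | P i) F i) (\big[Rplus/R0]_(i | P i) G i).
Proof.
move=> H Pi0 Hi0; rewrite (bigD1 i0) //= [X in Rlt _ X](bigD1 i0) //=.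
have := @rsum_le _ (index_enum I) (fun i => P i && (i != i0)) F G.
move=> /(_ (fun i Hi => H i (proj1 (elimT andP Hi)))); lra.
Qed.

Lemma rsum_const (T : finType) (X : {set T}) (c : R) :
  \big[Rplus/R0]_(x in X) c = Rmult (INR #|X|) c.
Proof.
rewrite big_const; elim: #|X| => [|k IH] /=; first by rewrite Rmult_0_l.
rewrite IH; case: k {IH} => [|k] /=; lra.
Qed.

Lemma K1 p d m j : prime p -> 0 < d -> coprime p m ->
  (d %| p ^ j * m) = (logn p d <= j) && (d`_p^' %| m).
Proof.
move=> pp d0 cpm.
rewrite -{1}(partnC p d0) Gauss_dvd ?coprime_partC //.
rewrite p_part Gauss_dvdl; last exact: coprimeXl.
rewrite (dvdn_Pexp2l _ _ (prime_gt1 pp)).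
congr andb; rewrite Gauss_dvdr //.
apply: p'nat_coprime; first exact: part_pnat.
by rewrite pnatX pnat_id.
Qed.

Lemma logn_p' p q m : 0 < m -> q != p -> prime p -> logn q m`_p^' = logn q m.
Proof.
move=> m0 qp pp; rewrite -{2}(partnC p m0) lognM ?part_gt0 //.
by rewrite p_part lognX (logn_prime q pp) (negbTE qp) muln0.
Qed.

Definition cnt (T : finType) (X : {set T}) (o : T -> nat) m := #|[set x in X | o x %| m]|.

Section Main.
Variable h : nat -> R.
Hypothesis hpos : forall d, Rlt 0 (h d).
Hypothesis hmul : forall a b, 0 < a -> 0 < b -> coprime a b -> h (a * b) = Rmult (h a) (h b).
Hypothesis hmono : forall p k, prime p -> Rle (h (p ^ k.+1)) (h (p ^ k)).

Definition Ssum (T : finType) (X : {set T}) (o : T -> nat) := \big[Rplus/R0]_(x in X) h (o x).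

Definition Xsub (T : finType) (X : {set T}) (o : T -> nat) p j := [set x in X | logn p (o x) <= j].
Definition opart (T : Type) (o : T -> nat) p := fun x => (o x)`_p^'.

Definition dlt p j := Rminus (h (p ^ j)) (h (p ^ j.+1)).

Lemma Tel p e v : v <= e ->
  Rplus (\big[Rplus/R0]_(j < e) (if v <= j then dlt p j else R0)) (h (p ^ e)) = h (p ^ v).
Proof.
elim: e => [|e IH]; first by rewrite leqn0 => /eqP ->; rewrite big_ord0 Rplus_0_l.
rewrite leq_eqVlt => /orP[/eqP ->|].
  rewrite big_ord_recr /= ltnn big1 ?Rplus_0_l // => i _.
  by rewrite leqNgt ltnS (ltnW (ltn_ord i)).
rewrite ltnS => ve; rewrite big_ord_recr /= ve -(IH ve); set S := \big[Rplus/R0]_(i < e) _; rewrite /dlt; lra.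
Qed.

Lemma Decomp p n (T : finType) (X : {set T}) o : prime p -> 0 < n ->
  (forall x, x \in X -> o x %| n) ->
  Ssum X o = Rplus (\big[Rplus/R0]_(j < logn p n)
        Rmult (dlt p j) (Ssum (Xsub X o p j) (opart o p)))
     (Rmult (h (p ^ logn p n)) (Ssum X (opart o p))).
Proof.
move=> pp n0 Xn; rewrite /Ssum /Xsub /opart.
have -> : \big[Rplus/R0]_(x in X) h (o x) = \big[Rplus/R0]_(x in X)
    Rplus (\big[Rplus/R0]_(j < logn p n) (if logn p (o x) <= j then
              Rmult (dlt p j) (h (o x)`_p^') else R0))
          (Rmult (h (p ^ logn p n)) (h (o x)`_p^')).
  apply: eq_bigr => x Xx.
  have ox0 : 0 < o x by apply: dvdn_gt0 n0 (Xn x Xx).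
  rewrite -{1}(partnC p ox0) hmul ?part_gt0 ?coprime_partC // p_part.
  rewrite -(Tel p (dvdn_leq_log p n0 (Xn x Xx))) Rmult_plus_distr_r big_distrl /=.
  congr Rplus; apply: eq_bigr => j _; case: ifP => _ //; lra.
rewrite big_split /= -big_distrr /=; congr Rplus.
rewrite exchange_big /=; apply: eq_bigr => j _.
rewrite big_distrr /=.
rewrite [RHS](eq_bigl (fun x => (x \in X) && (logn p (o x) <= j))); last first.
  by move=> x; rewrite inE.
by rewrite [RHS]big_mkcondr /=.
Qed.

Lemma cnt_split p n (T : finType) (X : {set T}) o j m : prime p -> 0 < n ->
  (forall x, x \in X -> o x %| n) -> m %| n`_p^' ->
  #|[set x in X | (logn p (o x) <= j) && ((o x)`_p^' %| m)]| = cnt X o (p ^ j * m).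
Proof.
move=> pp n0 Xn mn; rewrite /cnt; apply: eq_card => x; rewrite !inE.
case Xx: (x \in X) => //=; rewrite K1 //; first exact: dvdn_gt0 n0 (Xn x Xx).
rewrite coprime_sym; apply: (@p'nat_coprime p); last exact: pnat_id.
exact: pnat_dvd mn (part_pnat _ _).
Qed.

Definition Concl (n : nat) (T U : finType) (X : {set T}) (Y : {set U}) (oX : T -> nat) (oY : U -> nat) : Prop :=
  Rle (Ssum Y oY) (Ssum X oX) /\ (forall m0, m0 %| n ->
     (forall p, prime p -> p %| n -> logn p m0 < logn p n ->
        Rlt (h (p ^ (logn p m0).+1)) (h (p ^ logn p m0))) ->
     cnt Y oY m0 < cnt X oX m0 -> Rlt (Ssum Y oY) (Ssum X oX)).


Lemma L n : 0 < n -> forall (T U : finType) (X : {set T}) (Y : {set U}) oX oY,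
  (forall x, x \in X -> oX x %| n) -> (forall y, y \in Y -> oY y %| n) ->
  (forall m, m %| n -> cnt Y oY m <= cnt X oX m) -> Concl n X Y oX oY.
Proof.
elim/ltn_ind: n => n IH n0 T U X Y oX oY HX HY Hc.
case: (ltngtP n 1) => [|n1|n1].
- by rewrite ltnS leqn0 => /eqP n00; rewrite n00 in n0.
- set p := pdiv n; have pp : prime p := pdiv_prime n1.
  have pn : p %| n := pdiv_dvd n.
  set e := logn p n; set n' := n`_p^'.
  have n'0 : 0 < n' := part_gt0 _ _.
  have ne : n`_p * n' = n := partnC p n0.
  have np1 : 1 < n`_p.
    rewrite p_part -[1](expn0 p) ltn_exp2l ?prime_gt1 //.
    by rewrite logn_gt0 mem_primes pp n0 pn.
  have n'lt : n' < n by rewrite -[X in _ < X]ne -{1}[n']mul1n ltn_pmul2r.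
  have p'n' : ~~ (p %| n').
    apply/negP => /pnat_dvd /(_ (part_pnat _ n)).
    by rewrite pnatE // !inE eqxx.
  have dvd_pj : forall j m', j <= e -> m' %| n' -> p ^ j * m' %| n.
    by move=> j m' je mn; rewrite -ne p_part dvdn_mul // dvdn_exp2l.
  have cXs : forall j m', m' %| n' -> cnt ((Xsub X oX p j)) (opart oX p) m' = cnt X oX (p ^ j * m').
    move=> j m' mn; rewrite -(cnt_split j pp n0 HX mn) /cnt.
    by apply: eq_card => x; rewrite !inE andbA.
  have cYs : forall j m', m' %| n' -> cnt ((Xsub Y oY p j)) (opart oY p) m' = cnt Y oY (p ^ j * m').
    move=> j m' mn; rewrite -(cnt_split j pp n0 HY mn) /cnt.
    by apply: eq_card => x; rewrite !inE andbA.
  have cXt : forall m', m' %| n' -> cnt X (opart oX p) m' = cnt X oX (p ^ e * m').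
    move=> m' mn; rewrite -(cnt_split e pp n0 HX mn) /cnt.
    apply: eq_card => x; rewrite !inE.
    by case Xx: (x \in X) => //=; rewrite dvdn_leq_log ?HX.
  have cYt : forall m', m' %| n' -> cnt Y (opart oY p) m' = cnt Y oY (p ^ e * m').
    move=> m' mn; rewrite -(cnt_split e pp n0 HY mn) /cnt.
    apply: eq_card => x; rewrite !inE.
    by case Xx: (x \in Y) => //=; rewrite dvdn_leq_log ?HY.
  have o1d : forall x, x \in X -> (opart oX p) x %| n' by move=> x Xx; apply: partn_dvd => //; apply: HX.
  have o2d : forall y, y \in Y -> (opart oY p) y %| n' by move=> x Xx; apply: partn_dvd => //; apply: HY.
  have Rj : forall j, j <= e -> Concl n' ((Xsub X oX p j)) ((Xsub Y oY p j)) (opart oX p) (opart oY p).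
    move=> j je; apply: IH => //.
    - by move=> x; rewrite inE => /andP[Xx _]; apply: o1d.
    - by move=> x; rewrite inE => /andP[Xx _]; apply: o2d.
    by move=> m' mn; rewrite cXs // cYs //; apply: Hc; apply: dvd_pj.
  have Rt : Concl n' X Y (opart oX p) (opart oY p).
    apply: IH => // m' mn; rewrite cXt // cYt //; apply: Hc; exact: dvd_pj.
  have dge : forall j, Rle 0 (dlt p j) by move=> j; have := hmono j pp; rewrite /dlt; lra.
  have hpe := hpos (p ^ e).
  rewrite /Concl (Decomp pp n0 HX) (Decomp pp n0 HY) -/e.
  have sumle : Rle (\big[Rplus/R0]_(j < e) Rmult (dlt p j) (Ssum ((Xsub Y oY p j)) (opart oY p)))
                   (\big[Rplus/R0]_(j < e) Rmult (dlt p j) (Ssum ((Xsub X oX p j)) (opart oX p))).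
    apply: rsum_le => j _; apply: Rmult_le_compat_l => //.
    by case: (Rj j (ltnW (ltn_ord j))).
  have topl : Rle (Rmult (h (p ^ e)) (Ssum Y (opart oY p))) (Rmult (h (p ^ e)) (Ssum X (opart oX p))).
    by apply: Rmult_le_compat_l; [lra | case: Rt].
  split; first lra.
  move=> m0 m0n cond lt.
  have m00 : 0 < m0 := dvdn_gt0 n0 m0n.
  set a := logn p m0; set m0' := m0`_p^'.
  have ae : a <= e := dvdn_leq_log p n0 m0n.
  have m0e : m0 = p ^ a * m0' by rewrite -p_part partnC.
  have m0'n : m0' %| n' := partn_dvd _ n0 m0n.
  have cond' : forall q, prime q -> q %| n' -> logn q m0' < logn q n' ->
        Rlt (h (q ^ (logn q m0').+1)) (h (q ^ logn q m0')).
    move=> q pq qn'; have qp : q != p by apply: contraNneq p'n' => <-.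
    rewrite !logn_p' // => lq; apply: cond => //.
    exact: dvdn_trans qn' (dvdn_part _ _).
  move: lt; rewrite m0e.
  have : (a < e) || (a == e) by rewrite orbC -leq_eqVlt.
  case/orP => [ae'|/eqP aeq].
  + rewrite -cXs // -cYs // => lt.
    have := (Rj a (ltnW ae')).2 m0' m0'n cond' lt => slt.
    have dpos : Rlt 0 (dlt p a).
      have := cond p pp pn ae'; rewrite /dlt -/a; lra.
    have : Rlt (\big[Rplus/R0]_(j < e) Rmult (dlt p j) (Ssum ((Xsub Y oY p j)) (opart oY p)))
               (\big[Rplus/R0]_(j < e) Rmult (dlt p j) (Ssum ((Xsub X oX p j)) (opart oX p))).
      apply: (@rsum_lt _ xpredT _ _ (Ordinal ae')) => //=.
        move=> j _; apply: Rmult_le_compat_l => //.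
        by case: (Rj j (ltnW (ltn_ord j))).
      by apply: Rmult_lt_compat_l.
    lra.
  + rewrite aeq -cXt // -cYt // => lt.
    have := Rt.2 m0' m0'n cond' lt => slt.
    have : Rlt (Rmult (h (p ^ e)) (Ssum Y (opart oY p))) (Rmult (h (p ^ e)) (Ssum X (opart oX p))).
      by apply: Rmult_lt_compat_l.
    lra.
- subst n.
  have e1 : forall (V : finType) (Z : {set V}) o, (forall z, z \in Z -> o z %| 1) ->
      Ssum Z o = Rmult (INR #|Z|) (h 1) /\ cnt Z o 1 = #|Z|.
    move=> V Z o HZ; split.
      rewrite /Ssum -rsum_const; apply: eq_bigr => z Zz.
      by have := HZ z Zz; rewrite dvdn1 => /eqP ->.
    rewrite /cnt; apply: eq_card => z; rewrite inE.
    by case Zz: (z \in Z) => //=; apply: HZ.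
  have [SX cX] := e1 _ _ _ HX; have [SY cY] := e1 _ _ _ HY.
  have h1 := hpos 1.
  rewrite /Concl SX SY; split.
    apply: Rmult_le_compat_r; first lra.
    by apply: le_INR; apply/leP; rewrite -cX -cY; apply: Hc.
  move=> m0; rewrite dvdn1 => /eqP -> _; rewrite cX cY => lt.
  by apply: Rmult_lt_compat_r => //; apply: lt_INR; apply/ltP.
Qed.
End Main.

Section K.
Local Open Scope R_scope.
Lemma keyineq s r lp lq : s < r -> s <= 0 -> 0 <= lq -> lq < lp ->
  s*lp - r*lq <= 0 /\ ((s < 0 \/ 0 < lq) -> s*lp - r*lq < 0).
Proof.
intros H1 H2 H3 H4.
assert (E : s*lp - r*lq = s*(lp-lq) + (s-r)*lq) by ring.
rewrite E.
assert (A : s*(lp-lq) <= 0).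
{ destruct H2 as [H2|H2]. left. replace 0 with (0*(lp-lq)) by ring. apply Rmult_lt_compat_r; lra.
  subst; lra. }
assert (B : (s-r)*lq <= 0).
{ replace 0 with (0*lq) by ring. apply Rmult_le_compat_r; lra. }
split. lra.
intros [C|C].
- assert (A' : s*(lp-lq) < 0). { replace 0 with (0*(lp-lq)) by ring. apply Rmult_lt_compat_r; lra. }
  lra.
- assert (B' : (s-r)*lq < 0). { replace 0 with (0*lq) by ring. apply Rmult_lt_compat_r; lra. }
  lra.
Qed.
Lemma exp_le' x y : x <= y -> exp x <= exp y.
Proof. intros [H|H]. left; apply exp_increasing; auto. right; subst; auto. Qed.
Lemma keyineq2 s r lp : s < r -> 0 < lp -> (s - r) * lp < 0.
Proof. intros. replace 0 with (0*lp) by ring. apply Rmult_lt_compat_r; lra. Qed.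
End K.
Definition hrs (r s : R) (d : nat) : R :=
  Rdiv (Rpower (INR d) s) (Rpower (INR (totient d)) r).

Lemma hrsE r s d : hrs r s d = exp (Rminus (Rmult s (ln (INR d))) (Rmult r (ln (INR (totient d))))).
Proof.
rewrite /hrs /Rpower /Rdiv /Rminus exp_plus exp_Ropp //.
Qed.

Lemma INR_lt' m n : m < n -> Rlt (INR m) (INR n).
Proof. by move=> /ltP; apply: lt_INR. Qed.

Lemma ln_ge0 x : Rle 1 x -> Rle 0 (ln x).
Proof.
move=> /Rle_lt_or_eq_dec [h|<-]; last by rewrite ln_1; lra.
rewrite -ln_1; left; apply: ln_increasing => //; lra.
Qed.

Lemma INR_mul a b : INR (a * b) = Rmult (INR a) (INR b).
Proof. by rewrite -mult_INR. Qed.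

Section H.
Variables r s : R.
Hypothesis sr : Rlt s r.
Hypothesis s0 : Rle s 0.

Lemma hrs_pos d : Rlt 0 (hrs r s d).
Proof. by rewrite hrsE; apply: exp_pos. Qed.

Lemma hrs_mul a b : 0 < a -> 0 < b -> coprime a b ->
  hrs r s (a * b) = Rmult (hrs r s a) (hrs r s b).
Proof.
move=> a0 b0 cab; rewrite !hrsE totient_coprime // !INR_mul.
have ta : 0 < totient a by rewrite totient_gt0.
have tb : 0 < totient b by rewrite totient_gt0.
rewrite !ln_mult; try by apply: lt_0_INR; apply/ltP.
rewrite -exp_plus; congr exp; ring.
Qed.

Lemma hrs_le p k : prime p -> (Rlt s 0 \/ 0 < k \/ 2 < p) ->
  Rlt (hrs r s (p ^ k.+1)) (hrs r s (p ^ k)).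
Proof.
move=> pp H; have p1 := prime_gt1 pp.
have Hp : Rlt 1 (INR p) by have := INR_lt' p1; simpl; lra.
have lp : Rlt 0 (ln (INR p)) by rewrite -ln_1; apply: ln_increasing; lra.
rewrite !hrsE; apply: exp_increasing.
case: k H => [|k] H.
  rewrite expn0 expn1 totient_prime // ln_1.
  have q1 : Rle 1 (INR p.-1).
    have : (1 <= p.-1)%coq_nat by apply/leP; rewrite -subn1 ltn_subRL addn0.
    by move/le_INR; simpl; lra.
  have lq : Rle 0 (ln (INR p.-1)) := ln_ge0 q1.
  have lpq : Rlt (ln (INR p.-1)) (ln (INR p)).
    apply: ln_increasing; first lra.
    by apply: INR_lt'; rewrite ltn_predL prime_gt0.
  have totient1 : totient 1 = 1 by [].
  have [_ K] := keyineq sr s0 lq lpq.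
  case: H => [Hs|[//|p2]].
    have := K (or_introl Hs); lra.
  have lq0 : Rlt 0 (ln (INR p.-1)).
    rewrite -ln_1; apply: ln_increasing; first lra.
    have : 1 < p.-1 by rewrite -subn1 ltn_subRL.
    by move/INR_lt'; simpl; lra.
  have := K (or_intror lq0); lra.
have e1 : p ^ k.+2 = p * p ^ k.+1 by rewrite expnS.
have e2 : totient (p ^ k.+2) = p * totient (p ^ k.+1).
  by rewrite !totient_pfactor // expnS mulnCA.
have pk : 0 < p ^ k.+1 by rewrite expn_gt0 prime_gt0.
have tk : 0 < totient (p ^ k.+1) by rewrite totient_gt0.
rewrite e1 e2 !INR_mul !ln_mult; try by apply: lt_0_INR; apply/ltP.
  2: by apply: lt_0_INR; apply/ltP; rewrite prime_gt0.
  2: by apply: lt_0_INR; apply/ltP; rewrite prime_gt0.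
have := keyineq2 sr lp; lra.
Qed.

Lemma hrs_mono p k : prime p -> Rle (hrs r s (p ^ k.+1)) (hrs r s (p ^ k)).
Proof.
move=> pp; case: k => [|k]; last by left; apply: hrs_le => //; right; left.
rewrite !hrsE expn0 expn1 totient_prime //.
have totient1 : totient 1 = 1 by [].
rewrite totient1 ln_1 !Rmult_0_r Rminus_0_r exp_0.
have p1 := prime_gt1 pp.
have q1 : Rle 1 (INR p.-1).
    have : (1 <= p.-1)%coq_nat by apply/leP; rewrite -subn1 ltn_subRL addn0.
    by move/le_INR; simpl; lra.
have lq : Rle 0 (ln (INR p.-1)) := ln_ge0 q1.
have lpq : Rlt (ln (INR p.-1)) (ln (INR p)).
  apply: ln_increasing; first lra.
  by apply: INR_lt'; rewrite ltn_predL prime_gt0.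
rewrite -exp_0; apply: exp_le'.
have [K _] := keyineq sr s0 lq lpq; lra.
Qed.
End H.

Section Grp.
Variable gT : finGroupType.
Implicit Types G C H K : {group gT}.

Definition cntG (G : {set gT}) m := #|[set x in G | #[x]%g %| m]|.

Lemma frob_cnt G m : m %| #|G| -> m <= cntG G m.
Proof.
move=> mG.
have e : [set x in G | #[x]%g %| m] = ('Ldiv_m(G))%g.
  by apply/setP => x; rewrite !inE order_dvdn.
rewrite /cntG e; apply: dvdn_leq; last exact: Frobenius_Ldiv.
by rewrite card_gt0; apply/set0Pn; exists 1%g; apply/LdivP; rewrite group1 expg1n.
Qed.

Lemma sub_cyc_order (c : gT) e : e %| #[c]%g ->
  exists D : {group gT}, [/\ D \subset <[c]>%g, cyclic D & #|D| = e].
Proof.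
move=> ec; exists <[c ^+ (#[c]%g %/ e)]>%G; split; first exact: cycleX.
  exact: cycle_cyclic.
have := cycle_sub_group ec => /setP /(_ <[c ^+ (#[c]%g %/ e)]>%G).
by rewrite set11 !inE => /andP[_ /eqP].
Qed.

Lemma G3 G (C : {group gT}) m : C \subset G -> cyclic C -> #|C| = m ->
  (forall e (H K : {group gT}), e %| m -> H \subset G -> K \subset G -> cyclic H -> cyclic K ->
     #|H| = e -> #|K| = e -> H = K) ->
  [set x in G | #[x]%g %| m] = C.
Proof.
move=> CG cC oC U; apply/setP => x; rewrite inE.
apply/andP/idP => [[Gx xm]|Cx]; last first.
  by split; [exact: subsetP CG x Cx | rewrite -oC order_dvdG].
case/cyclicP: cC => c defC.
have oc : #[c]%g = m by rewrite -oC defC.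
have xc : #[x]%g %| #[c]%g by rewrite oc.
have [D [DC cD oD]] := sub_cyc_order xc.
have DG : D \subset G by rewrite (subset_trans DC) // -defC.
have e := U _ <[x]>%G D xm; rewrite cycle_subG Gx cycle_cyclic in e.
have xD : <[x]>%G = D by apply: e.
rewrite defC -cycle_subG; apply: subset_trans DC.
by rewrite -xD.
Qed.

Lemma grp_eq (H K : {group gT}) : H \subset K -> K \subset H -> H = K.
Proof. by move=> HK KH; apply: val_inj; apply/eqP; rewrite eqEsubset HK. Qed.

Lemma cyc_cnt (C : {group gT}) m : cyclic C -> m %| #|C| -> cntG C m = m.
Proof.
move=> cC mC; have cC' := cC; case/cyclicP: cC' => c defC.
have mc : m %| #[c]%g by rewrite /order -defC.
have [D [DC cD oD]] := sub_cyc_order mc.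
rewrite /cntG (@G3 C D m) //; first by rewrite defC.
move=> e H K _ HC KC _ _ oH oK; apply: grp_eq.
  by rewrite -(cardSg_cyclic cC HC KC) oH oK.
by rewrite -(cardSg_cyclic cC KC HC) oH oK.
Qed.

Lemma num1P G m : num_cyclic_subgroups G m = 1 ->
  exists C : {group gT}, [/\ C \subset G, cyclic C, #|C| = m &
    forall H : {group gT}, H \subset G -> cyclic H -> #|H| = m -> H = C].
Proof.
rewrite /num_cyclic_subgroups => /eqP /cards1P [C0 e].
have : C0 \in [set H : {group gT} | [&& H \subset G, cyclic H & #|H| == m]] by rewrite e set11.
rewrite inE => /and3P[C0G cC0 /eqP oC0].
exists C0; split => // H HG cH oH.
have : H \in [set H : {group gT} | [&& H \subset G, cyclic H & #|H| == m]].
  by rewrite inE HG cH oH eqxx.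
by rewrite e => /set1P.
Qed.

Lemma num_cnt G n : 0 < n -> (forall e, 0 < e -> e %| n -> num_cyclic_subgroups G e = 1) ->
  forall m, m %| n -> cntG G m = m.
Proof.
move=> n0 Hn m mn; have m0 : 0 < m := dvdn_gt0 n0 mn.
have [C [CG cC oC _]] := num1P (Hn m m0 mn).
rewrite /cntG (@G3 G C m) //.
move=> e H K em HG KG cH cK oH oK.
have e0 : 0 < e := dvdn_gt0 m0 em.
have [C' [_ _ _ U]] := num1P (Hn e e0 (dvdn_trans em mn)).
by rewrite (U H) // (U K).
Qed.

Lemma cnt_part G m : 0 < m ->
  cntG G m = \sum_(e < m.+1 | e %| m) #|[set x in G | #[x]%g == e]|.
Proof.
move=> m0; rewrite /cntG -sum1_card.
rewrite (eq_bigl (fun x => (x \in G) && (#[x]%g %| m))); last by move=> x; rewrite inE.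
rewrite (partition_big (fun x => (inord #[x]%g : 'I_m.+1)) (fun e : 'I_m.+1 => val e %| m)) /=.
  apply: eq_bigr => e em; rewrite -sum1_card; apply: eq_bigl => x; rewrite inE.
  case Gx: (x \in G) => //=.
  apply/andP/eqP => [[xm /eqP <-]|xe].
    by rewrite inordK // ltnS dvdn_leq.
  split; first by rewrite xe.
  by apply/eqP; apply: val_inj; rewrite /= xe inordK // ltnS -xe.
move=> x /andP[_ xm]; rewrite inordK // ltnS dvdn_leq //.
Qed.

Lemma ord_tot G n : 0 < n -> (forall m, m %| n -> cntG G m = m) ->
  forall d, d %| n -> #|[set x in G | #[x]%g == d]| = totient d.
Proof.
move=> n0 Hc; elim/ltn_ind => d IH dn.
have d0 := dvdn_gt0 n0 dn.
have e := cnt_part G d0; rewrite Hc // in e.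
have t := sum_totient_dvd d.
rewrite (bigD1 ord_max) ?dvdnn //= in e.
rewrite (bigD1 ord_max) ?dvdnn //= in t.
set S1 := \sum_(i < d.+1 | _) _ in e.
set S2 := \sum_(i < d.+1 | _) _ in t.
have S12 : S1 = S2.
  apply: eq_bigr => i /andP[id ineq]; apply: IH; last exact: dvdn_trans id dn.
  have ineq' : val i != d by apply: contra ineq => /eqP ie; apply/eqP; apply: val_inj.
  by rewrite ltn_neqAle ineq' /= -ltnS ltn_ord.
have f : #|[set x in G | #[x]%g == d]| + S1 = totient d + S2 by rewrite -e t.
by apply/eqP; rewrite -(eqn_add2r S2) -S12 f S12.
Qed.

Lemma cnt_num G n : 0 < n -> (forall m, m %| n -> cntG G m = m) ->
  forall m, 0 < m -> m %| n -> num_cyclic_subgroups G m = 1.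
Proof.
move=> n0 Hc m m0 mn.
have := ord_tot n0 Hc mn => a.
have : 0 < #|[set x in G | #[x]%g == m]| by rewrite a totient_gt0.
rewrite card_gt0 => /set0Pn [x]; rewrite inE => /andP[Gx /eqP xm].
have key : forall K : {group gT}, K \subset G -> #|K| = m ->
    (K : {set gT}) = [set y in G | #[y]%g %| m].
  move=> K KG oK; apply/eqP; rewrite eqEcard.
  have -> : #|[set y in G | #[y]%g %| m]| = m by apply: Hc.
  rewrite oK leqnn andbT; apply/subsetP => y Ky.
  by rewrite inE (subsetP KG y Ky) -oK order_dvdG.
have CG : <[x]>%G \subset G by rewrite cycle_subG.
apply/eqP/cards1P; exists <[x]>%G; apply/setP => H; rewrite !inE.
apply/and3P/eqP => [[HG cH /eqP oH]|->].
  by apply: val_inj; rewrite /= (key _ HG oH) (key _ CG).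
by rewrite CG cycle_cyclic /= -/(order x) xm.
Qed.
End Grp.

Section Grp2.
Variable gT : finGroupType.

Lemma frob_dvd (G : {group gT}) m : m %| #|G| -> m %| cntG G m.
Proof.
move=> mG.
have e : [set x in G | #[x]%g %| m] = ('Ldiv_m(G))%g.
  by apply/setP => x; rewrite !inE order_dvdn.
by rewrite /cntG e; exact: Frobenius_Ldiv.
Qed.

Lemma odd_fix (G : {group gT}) m : 0 < m -> odd m -> 2 * m %| #|G| ->
  cntG G (2 * m) = 2 * m -> cntG G m = m.
Proof.
move=> m0 om mG c2.
have mG' : m %| #|G| := dvdn_trans (dvdn_mull 2 (dvdnn m)) mG.
have sub : [set x in G | #[x]%g %| m] \subset [set x in G | #[x]%g %| 2 * m].
  apply/subsetP => x; rewrite !inE => /andP[-> xm] /=.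
  exact: dvdn_trans xm (dvdn_mull 2 (dvdnn m)).
have le2 : cntG G m <= 2 * m by rewrite -c2; apply: subset_leq_card.
have ge : m <= cntG G m := frob_cnt mG'.
case/dvdnP: (frob_dvd mG') => q eq.
have q2 : q <= 2 by rewrite -(leq_pmul2r m0) -eq.
have q1 : 0 < q by rewrite -(ltn_pmul2r m0) -eq mul0n (leq_trans m0 ge).
have : (q == 1) || (q == 2).
  by move: q1 q2; clear; case: q => [|[|[|q]]].
case/orP => /eqP qv; first by rewrite eq qv mul1n.
rewrite qv in eq.
exfalso.
have seq : [set x in G | #[x]%g %| m] = [set x in G | #[x]%g %| 2 * m].
  apply/eqP; rewrite eqEcard sub /=.
  by have := c2; rewrite /cntG => ->; rewrite -/(cntG G m) eq.
have [x Gx ox] := Cauchy (isT : prime 2) (dvdn_trans (dvdn_mulr m (dvdnn 2)) mG).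
have : x \in [set x in G | #[x]%g %| 2 * m] by rewrite inE Gx ox dvdn_mulr.
rewrite -seq inE ox => /andP[_].
by rewrite dvdn2 om.
Qed.
End Grp2.

Lemma cyc_Zp N : cyclic (Zp N).
Proof.
rewrite /Zp; case: ifP => _; last exact: cyclic1.
by rewrite Zp_cycle; apply: cycle_cyclic.
Qed.

Theorem mainTheorem4 (r s : R) (gT : finGroupType) (G : {group gT}) (n : nat) :
  Rlt s r -> Rle s R0 -> (0 < n)%N -> (n %| #|G|)%N ->
  Rle R0 (Tsum G n r s) /\
  (Tsum G n r s = R0 <->
     (forall m : nat, (0 < m)%N -> (m %| n)%N -> num_cyclic_subgroups G m = 1%N)).
Proof.
move=> sr s0 n0 nG.
set N := #|G|.
have N0 : 0 < N := cardG_gt0 G.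
have cardC : #|Zp N| = N := card_Zp N0.
set X := [set x in G | #[x]%g %| n].
set Y := [set y in Cyc N | #[y]%g %| n].
have HX : forall x, x \in X -> #[x]%g %| n by move=> x; rewrite inE => /andP[].
have HY : forall x, x \in Y -> #[x]%g %| n by move=> x; rewrite inE => /andP[].
have RX : Rsum G n r s = Ssum (hrs r s) X order.
  by rewrite /Rsum /Ssum; apply: eq_bigl => x; rewrite inE.
have RY : Rsum (Cyc N) n r s = Ssum (hrs r s) Y order.
  by rewrite /Rsum /Ssum; apply: eq_bigl => x; rewrite inE.
have cX : forall m, m %| n -> cnt X order m = cntG G m.
  move=> m mn; apply: eq_card => x; rewrite !inE.
  case: (x \in G) => //=; apply/andP/idP => [[]//|xm]; split=> //.
  exact: dvdn_trans xm mn.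
have cY : forall m, m %| n -> cnt Y order m = m.
  move=> m mn; rewrite -[RHS](@cyc_cnt _ (Zp_group N) m (cyc_Zp N)); last first.
    by rewrite /= cardC (dvdn_trans mn nG).
  apply: eq_card => x; rewrite !inE /Cyc.
  case: (x \in Zp N) => //=; apply/andP/idP => [[]//|xm]; split=> //.
  exact: dvdn_trans xm mn.
have Hc : forall m, m %| n -> cnt Y order m <= cnt X order m.
  by move=> m mn; rewrite cX // cY //; apply: frob_cnt; apply: dvdn_trans mn nG.
have hp := hrs_pos r s; have hm := hrs_mul r s; have hmo := hrs_mono sr s0.
have [Hle Hlt] := L hp hm hmo n0 HX HY Hc.
rewrite /Tsum RX RY.
split; first lra.
split.
- move=> T0.
  have nostrict : forall m, m %| n ->
      (forall p, prime p -> p %| n -> logn p m < logn p n ->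
        Rlt (hrs r s (p ^ (logn p m).+1)) (hrs r s (p ^ logn p m))) ->
      cntG G m = m.
    move=> m mn cond; rewrite -cX // -[RHS](cY m mn).
    have := Hc m mn; rewrite leq_eqVlt => /orP[/eqP -> //|lt].
    have := Hlt m mn cond lt; lra.
  have condok : forall m, 0 < m -> (Rlt s 0 \/ 2 %| m \/ ~~ (2 %| n)) ->
      forall p, prime p -> p %| n -> logn p m < logn p n ->
        Rlt (hrs r s (p ^ (logn p m).+1)) (hrs r s (p ^ logn p m)).
    move=> m m0 H p pp pn _; apply: hrs_le => //.
    case: H => [H|H]; first by left.
    right; have [p2|p2] := eqVneq p 2.
      left; case: H => [H|H]; last by rewrite -p2 pn in H.
      by rewrite logn_gt0 mem_primes pp m0 p2.
    right; have := prime_gt1 pp; rewrite leq_eqVlt => /orP[/eqP p2'|//].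
    by rewrite -p2' eqxx in p2.
  apply: (cnt_num n0) => m mn.
  have m0 : 0 < m := dvdn_gt0 n0 mn.
  have [s0'|s0'] := Rle_lt_or_eq_dec _ _ s0.
    by apply: nostrict => //; apply: condok => //; left.
  case e2m : (2 %| m).
    by apply: nostrict => //; apply: condok => //; right; left.
  case e2n : (2 %| n); last first.
    by apply: nostrict => //; apply: condok => //; right; right; rewrite e2n.
  have om : odd m by rewrite -[odd m]negbK -dvdn2 e2m.
  have m2n : 2 * m %| n by rewrite Gauss_dvd ?coprime2n ?om // e2n mn.
  apply: odd_fix => //; first exact: dvdn_trans m2n nG.
  apply: nostrict => //; apply: condok; first by rewrite muln_gt0.
  by right; left; apply: dvdn_mulr.
- move=> Hnum.
  have cG := num_cnt n0 Hnum.
  have Hc' : forall m, m %| n -> cnt X order m <= cnt Y order m.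
    by move=> m mn; rewrite cX // cY // cG.
  have [Hle' _] := L hp hm hmo n0 HY HX Hc'.
  lra.
Qed.
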